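(* Let $l$ and $m$ be integers with $l \geqslant 2$ and $0 \leqslant m \leqslant 4l$. Then \[ f(l,m) := \sum_{j=0}^{\min\{l, \lfloor m/2\rfloor\}} \binom{l}{j}\binom{4l}{2m-4j} \geqslant \binom{4l}{m}. \]
   Context: Convention: $\binom{a}{b} = 0$ if $b > a$. *)

(* Defs.v *)
From mathcomp Require Import all_boot.
Set Implicit Arguments. Unset Strict Implicit. Unset Printing Implicit Defensive.

(* Note: for j <= floor(m/2), 2m - 4j >= 0, so truncated nat subtraction is exact.
   mathcomp's 'C(a,b) = 0 when b > a, matching the paper's convention. *)
Definition f (l m : nat) : nat :=
  \sum_(0 <= j < (minn l m./2).+1) 'C(l, j) * 'C(4 * l, 2 * m - 4 * j).

(* Main.v *)
Require Import Defs.
From mathcomp Require Import all_boot all_algebra zify.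
Import GRing.Theory.

Lemma mulrnN (a b : nat) : (a *+ b)%R = a * b.
Proof. by rewrite -mulr_natr natn. Qed.

Lemma coef_binpow (k n : nat) (B : {poly nat}) (i : nat) :
  (((1 + 'X^k) ^+ n * B)`_i)%R =
  \sum_(j < n.+1) 'C(n, j) * (if i < k * j then 0 else (B`_(i - k * j))%R).
Proof.
rewrite exprDn mulr_suml coef_sum; apply: eq_bigr => j _.
rewrite expr1n mul1r mulrnAl coefMn -exprM coefXnM mulrnN mulnC.
by [].
Qed.

Lemma sum_delta (n t : nat) (F : nat -> nat) :
  \sum_(j < n.+1) F j * (t == j) = (if t <= n then F t else 0).
Proof.
elim: n => [|n IH].
  by rewrite big_ord1; case: t => [|t] /=; rewrite ?muln1 ?muln0.
rewrite big_ord_recr /= IH.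
case: (ltngtP t n.+1) => [h|h|->]; rewrite ?muln0 ?muln1 ?addn0.
- by rewrite -ltnS h.
- by rewrite leqNgt (ltn_trans (ltnSn n) h).
- by rewrite ltnn.
Qed.

Lemma coef_X1 (n t : nat) : (((1 + 'X) ^+ n)`_t)%R = 'C(n, t).
Proof.
have := coef_binpow 1 n 1 t; rewrite expr1 mulr1 => ->.
rewrite (eq_bigr (fun j : 'I_n.+1 => 'C(n, j) * (t == j))); last first.
  move=> j _; rewrite mul1n coef1; case: ltngtP => h //.
  - by rewrite subn_eq0 leqNgt h.
  - by rewrite h subnn.
rewrite sum_delta; case: leqP => // h; by rewrite bin_small.
Qed.

Lemma coef_G (n i : nat) :
  (((1 + 'X^2) ^+ n)`_i)%R = if odd i then 0 else 'C(n, i./2).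
Proof.
have := coef_binpow 2 n 1 i; rewrite mulr1 => ->.
rewrite (eq_bigr (fun j : 'I_n.+1 => 'C(n, j) * (i == j.*2))); last first.
  move=> j _; rewrite coef1 mul2n; case: ltngtP => h //.
  - by rewrite subn_eq0 leqNgt h.
  - by rewrite h subnn.
case: ifP => hodd.
  rewrite big1 // => j _.
  case: eqP => [e|]; last by rewrite muln0.
  by move: hodd; rewrite e odd_double.
have hi : i = (i./2).*2 by rewrite -{1}(odd_double_half i) hodd.
rewrite (eq_bigr (fun j : 'I_n.+1 => 'C(n, j) * (i./2 == j))); last first.
  by move=> j _; rewrite {1}hi (inj_eq (can_inj doubleK)).
rewrite sum_delta; case: leqP => // h; by rewrite bin_small.
Qed.

Definition Pl (l : nat) : {poly nat} := ((1 + 'X^4) ^+ l * (1 + 'X) ^+ (4 * l))%R.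
Definition Gl (l : nat) : {poly nat} := ((1 + 'X^2) ^+ (4 * l))%R.

Lemma coef_P (l i : nat) : ((Pl l)`_i)%R =
  \sum_(j < l.+1) 'C(l, j) * (if i < 4 * j then 0 else 'C(4 * l, i - 4 * j)).
Proof.
rewrite /Pl coef_binpow; apply: eq_bigr => j _; by rewrite coef_X1.
Qed.

Definition Rel (G P : {poly nat}) :=
  forall i, (G`_i)%R <= (if odd i then 0 else (P`_i)%R).

Lemma Rel_mul G1 G2 P1 P2 : Rel G1 P1 -> Rel G2 P2 -> Rel (G1 * G2)%R (P1 * P2)%R.
Proof.
move=> h1 h2 i; rewrite !coefM.
have key : forall j : 'I_i.+1, ((G1`_j)%R * (G2`_(i - j))%R <=
   if odd i then 0 else (P1`_j)%R * (P2`_(i - j))%R).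
  move=> j; have := h1 j; have := h2 (i - j).
  have hj : j <= i by rewrite -ltnS.
  rewrite (oddB hj).
  case: (odd j) => /=; last rewrite addbF.
    by move=> _; rewrite leqn0 => /eqP ->.
  case: (odd i) => /=.
    by rewrite leqn0 => /eqP -> _; rewrite muln0.
  by move=> a b; apply: leq_mul.
case: ifP => hi.
  by rewrite leqn0 sum_nat_eq0; apply/forallP => j; apply/implyP => _; have := key j; rewrite hi leqn0.
apply: leq_sum => j _; have := key j; by rewrite hi.
Qed.

Lemma base2 : Rel (Gl 2) (Pl 2).
Proof.
move=> i; rewrite /Gl coef_G coef_P; case: ifP => // ho.
case: (leqP 9 i./2) => h; first by rewrite bin_small.
have : i < 9.*2 by rewrite -ltn_half_double.
clear h; move: i ho.
do 18! (case; first by move=> /= ho _; try discriminate ho; rewrite !big_ord_recr big_ord0).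
by [].
Qed.

Lemma base3 : Rel (Gl 3) (Pl 3).
Proof.
move=> i; rewrite /Gl coef_G coef_P; case: ifP => // ho.
case: (leqP 13 i./2) => h; first by rewrite bin_small.
have : i < 13.*2 by rewrite -ltn_half_double.
clear h; move: i ho.
do 26! (case; first by move=> /= ho _; try discriminate ho; rewrite !big_ord_recr big_ord0).
by [].
Qed.

Lemma Gl_add a b : Gl (a + b) = (Gl a * Gl b)%R.
Proof. by rewrite /Gl mulnDr exprD. Qed.

Lemma Pl_add a b : Pl (a + b) = (Pl a * Pl b)%R.
Proof. by rewrite /Pl mulnDr !exprD mulrACA. Qed.

Lemma Rel_all l : 2 <= l -> Rel (Gl l) (Pl l).
Proof.
elim/ltn_ind: l => l IH hl.
case: (ltnP l 4) => h4.
  have [->|->] : l = 2 \/ l = 3 by lia.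
  - exact: base2.
  - exact: base3.
rewrite -(subnK hl) Gl_add Pl_add; apply: Rel_mul; last exact: base2.
apply: IH; lia.
Qed.

Theorem lemma3p16 (l m : nat) (hl : 2 <= l) (hm : m <= 4 * l) :
  'C(4 * l, m) <= f l m.
Proof.
have := @Rel_all l hl (2 * m).
rewrite /Gl coef_G mul2n odd_double doubleK -/(Gl l) coef_P => H.
apply: (leq_trans H).
rewrite /f -(big_mkord xpredT (fun j => 'C(l, j) * (if m.*2 < 4 * j then 0 else 'C(4 * l, m.*2 - 4 * j)))).
have hK : (minn l m./2).+1 <= l.+1 by rewrite ltnS geq_minl.
rewrite (@big_cat_nat _ _ _ (minn l m./2).+1) /= ?ltn0Sn //.
rewrite [X in _ + X]big1_seq ?addn0; last first.
  move=> j; rewrite mem_index_iota => /andP [h1 h2].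
  have : m./2 < j by move: h1 h2; set k := m./2; lia.
  rewrite ltn_half_double -mul2n => h3.
  have -> : m.*2 < 4 * j by rewrite -mul2n; lia.
  by rewrite muln0.
apply: leq_sum => j _; rewrite mul2n; apply: leq_mul => //.
by case: ifP.
Qed.
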